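(* In the LCD setting of the context, with generic parameters, fix a context $k$ whose intervention target is node $k$, and let $D^{(k)}\in\mathbb{R}^{q\times q}$ be diagonal with $D^{(k)}_{j,j}\in\{1,-1\}$ for $j\neq k$ and $D^{(k)}_{k,k}\notin\{0,1,-1\}$. For $j_1,j_2\in\mathrm{an}(k)$, there exists $\alpha\in\mathbb{R}$ such that $$(I-\Lambda^{(0)})^{-1}_{i,j_1}-\big((I-\Lambda^{(k)})^{-1}D^{(k)}\big)_{i,j_2}=\alpha\Big((I-\Lambda^{(0)})^{-1}_{i,k}-\big((I-\Lambda^{(k)})^{-1}D^{(k)}\big)_{i,k}\Big)$$ for all $i\in[q]$ if and only if $j_1=j_2$ and $D^{(k)}_{j_1,j_1}=1$.
   Context: LCD setting: $\Lambda^{(0)}\in\mathbb{R}^{q\times q}$ with $\lambda^{(0)}_{i,j}\ne0$ iff $j\to i$ is an edge of a DAG $\mathcal{G}$ on $[q]$, with generic nonzero entries; $\Lambda^{(k)}$ agrees with $\Lambda^{(0)}$ except in row $k$, which is either zero (perfect intervention) or has generic entries with $\lambda^{(k)}_{k,j}\ne\lambda^{(0)}_{k,j}$ whenever $\lambda^{(0)}_{k,j}\ne0$ (soft intervention). $\mathrm{an}(k)$ is the set of ancestors of $k$ in $\mathcal{G}$ (nodes $m\ne k$ with a directed path $m\to\cdots\to k$). *)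

(* Defs.v *)
From mathcomp Require Import all_boot all_order all_algebra.
From mathcomp Require Import reals.
Set Implicit Arguments. Unset Strict Implicit. Unset Printing Implicit Defensive.
Import Order.TTheory GRing.Theory Num.Theory.
Local Open Scope ring_scope.

(* A directed graph on [q] = 'I_q, given by E : rel 'I_q where E j i means
   that j -> i is an edge. It is a DAG when no edge closes a directed cycle
   (connect E is the reflexive-transitive closure; this also forbids self-loops). *)
Definition is_DAG (q : nat) (E : rel 'I_q) : Prop :=
  forall i j, E i j -> ~~ connect E j i.

Definition an (q : nat) (E : rel 'I_q) (k : 'I_q) : {set 'I_q} :=
  [set m | (m != k) && connect E m k].

Definition LCD_observational (R : realType) (q : nat) (E : rel 'I_q)
  (L0 : 'M[R]_q) : Prop :=
  forall i j, (L0 i j != 0) = E j i.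

(* Lambda^(k) agrees with Lambda^(0) outside row k; row k is either zero
   (perfect intervention) or a soft intervention: same support as row k of
   Lambda^(0) (i.e. the parents of k), with every entry on an edge changed. *)
Definition LCD_intervention (R : realType) (q : nat) (E : rel 'I_q)
  (k : 'I_q) (L0 Lk : 'M[R]_q) : Prop :=
  (forall i j, i != k -> Lk i j = L0 i j) /\
  ((forall j, Lk k j = 0) \/
   (forall j, (Lk k j != 0) = E j k /\ (L0 k j != 0 -> Lk k j != L0 k j))).

(* Main.v *)
Require Import Defs.
From mathcomp Require Import all_boot all_order all_algebra.
From mathcomp Require Import reals.
From mathcomp Require Import ring.
Import Order.TTheory GRing.Theory Num.Theory.
Local Open Scope ring_scope.
Set Implicit Arguments.

Lemma dag_ind (q : nat) (E : rel 'I_q) (P : 'I_q -> Prop) : is_DAG E ->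
  (forall m, (forall i, E i m -> P i) -> P m) -> forall m, P m.
Proof.
move=> dag H.
suff S : forall n m, (#|[set a | connect E a m]| <= n)%N -> P m.
  by move=> m; apply: (S _ m (leqnn _)).
elim=> [|n IH] m.
  rewrite leqn0 => /eqP/cards0_eq/setP/(_ m); by rewrite !inE connect0.
move=> Hc; apply: H => i Eim; apply: IH.
have: (#|[set a | connect E a i]| < #|[set a | connect E a m]|)%N.
  apply: proper_card; apply/properP; split.
    apply/subsetP => a; rewrite !inE => ai.
    by apply: connect_trans ai (connect1 Eim).
  exists m; first by rewrite inE connect0.
  by rewrite inE; apply: dag.
by move=> lt; rewrite -ltnS; apply: leq_trans lt Hc.
Qed.

Arguments dag_ind {q E P}.
Section S.
Variables (R : realType) (q : nat) (E : rel 'I_q).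
Hypothesis dag : is_DAG E.

Lemma dag_inj (L : 'M[R]_q) (x : 'cV[R]_q) :
  (forall i j, L i j != 0 -> E j i) -> (1%:M - L) *m x = 0 -> x = 0.
Proof.
move=> supp; rewrite mulmxBl mul1mx => /eqP; rewrite subr_eq0 => /eqP xe.
apply/matrixP => i j; rewrite (ord1 j) mxE.
move: i; apply: (dag_ind dag) => m IH.
rewrite xe mxE big1 // => l _.
have [->|nz] := eqVneq (L m l) 0; first by rewrite mul0r.
by rewrite IH ?mulr0 //; apply: supp.
Qed.

Lemma dag_unit (L : 'M[R]_q) :
  (forall i j, L i j != 0 -> E j i) -> (1%:M - L) \in unitmx.
Proof.
move=> supp; rewrite -unitmx_tr -row_free_unit; apply: inj_row_free => v H.
have : (1%:M - L) *m v^T = 0 by rewrite -[LHS]trmxK trmx_mul trmxK H trmx0.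
move/(dag_inj supp) => /(congr1 trmx); by rewrite trmxK trmx0.
Qed.

Lemma dag_inv0 (L : 'M[R]_q) k :
  (forall i j, L i j != 0 -> E j i) ->
  forall m, ~~ connect E k m -> (invmx (1%:M - L)) m k = 0.
Proof.
move=> supp; set B := invmx _.
have HB : B = 1%:M + L *m B.
  have := mulmxV (@dag_unit L supp); rewrite -/B mulmxBl mul1mx => <-.
  by rewrite subrK.
apply: (dag_ind dag) => m IH nc.
rewrite HB !mxE.
have mk : m != k by apply: contraNneq nc => ->; rewrite connect0.
rewrite (negbTE mk) add0r big1 // => l _.
have [->|nz] := eqVneq (L m l) 0; first by rewrite mul0r.
have El := supp _ _ nz.
rewrite IH ?mulr0 //.
by apply: contra nc => c; apply: connect_trans c (connect1 El).
Qed.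
End S.

Lemma diag_entry (R : realType) q (X D : 'M[R]_q) i j :
  (forall i j, i != j -> D i j = 0) -> (X *m D) i j = X i j * D j j.
Proof.
move=> Dd; rewrite mxE (bigD1 j) //= big1 ?addr0 // => l lj.
by rewrite Dd ?mulr0.
Qed.

Theorem proposition2p9 (R : realType) (q : nat) (E : rel 'I_q)
  (L0 Lk D : 'M[R]_q) (k : 'I_q) :
  is_DAG E ->
  LCD_observational E L0 ->
  LCD_intervention E k L0 Lk ->
  (forall i j, i != j -> D i j = 0) ->
  (forall j, j != k -> D j j = 1 \/ D j j = -1) ->
  D k k != 0 -> D k k != 1 -> D k k != -1 ->
  forall j1 j2, j1 \in an E k -> j2 \in an E k ->
  (exists alpha : R, forall i : 'I_q,
      invmx (1%:M - L0) i j1 - (invmx (1%:M - Lk) *m D) i j2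
      = alpha * (invmx (1%:M - L0) i k - (invmx (1%:M - Lk) *m D) i k))
  <-> (j1 = j2 /\ D j1 j1 = 1).
Proof.
move=> dag obs [Lrow Lint] Dd Dpm Dk0 Dk1 DkN j1 j2.
rewrite !inE => /andP[j1k _] /andP[j2k _].
have supp0 : forall i j, L0 i j != 0 -> E j i by move=> i j; rewrite obs.
have suppk : forall i j, Lk i j != 0 -> E j i.
  move=> i j; have [->|ik] := eqVneq i k; last by rewrite Lrow // obs.
  case: Lint => [-> | H]; first by rewrite eqxx.
  by rewrite (H j).1.
set A0 := 1%:M - L0; set Ak := 1%:M - Lk.
set B0 := invmx A0; set Bk := invmx Ak.
have uA0 : A0 \in unitmx by apply: dag_unit supp0.
have uAk : Ak \in unitmx by apply: dag_unit suppk.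
have HP : forall i j, (A0 *m B0) i j = (i == j)%:R by move=> i j; rewrite mulmxV // mxE.
have HQ0 : A0 *m Bk = 1%:M + (Lk - L0) *m Bk.
  rewrite -(mulmxV uAk) -mulmxDl; congr (_ *m _).
  by rewrite /A0 /Ak addrA subrK.
have HQ : forall i j, i != k -> (A0 *m Bk) i j = (i == j)%:R.
  move=> i j ik; rewrite HQ0 !mxE big1 ?addr0 // => l _.
  by rewrite !mxE Lrow // subrr mul0r.
have Dd' := fun X i j => @diag_entry R q X D i j Dd.
split.
  case=> a H.
  have e : \sum_i A0 j1 i * (B0 i j1 - (Bk *m D) i j2)
         = \sum_i A0 j1 i * (a * (B0 i k - (Bk *m D) i k)).
    by apply: eq_bigr => i _; rewrite H.
  have e1 : forall j, \sum_i A0 j1 i * (B0 i j1 - (Bk *m D) i j)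
       = (A0 *m B0) j1 j1 - ((A0 *m Bk) *m D) j1 j.
    move=> j; rewrite -mulmxA !mxE -sumrB; apply: eq_bigr => i _.
    by rewrite mulrBr.
  have e2 : \sum_i A0 j1 i * (a * (B0 i k - (Bk *m D) i k))
       = a * ((A0 *m B0) j1 k - ((A0 *m Bk) *m D) j1 k).
    rewrite -mulmxA !mxE -sumrB mulr_sumr.
    by apply: eq_bigr => i _; rewrite mulrBr mulrBr mulrBr !mulrA [A0 j1 i * a]mulrC.
  move: e; rewrite e1 e2 !Dd' !HP !HQ // eqxx (negbTE j1k) mul0r subrr mulr0.
  have [<-|ne] := eqVneq j1 j2; last by rewrite mul0r subr0 => /eqP; rewrite oner_eq0.
  by rewrite mul1r => /eqP; rewrite subr_eq0 => /eqP <-.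
case=> <- Dj.
have HB : forall i j, Bk i j = \sum_l B0 i l * (A0 *m Bk) l j.
  have E0 : Bk = B0 *m (A0 *m Bk) by rewrite mulmxA mulVmx // mul1mx.
  by move=> i j; rewrite {1}E0 mxE.
have ckk : (A0 *m Bk) k k = 1.
  rewrite HQ0 !mxE eqxx big1 ?addr0 // => l _.
  have [->|nz] := eqVneq ((Lk - L0) k l) 0; first by rewrite mul0r.
  have Elk : E l k.
    move: nz; rewrite mxE; have [/suppk //|] := boolP (Lk k l != 0).
    rewrite negbK => /eqP ->.
    rewrite add0r mxE oppr_eq0; exact: supp0.
  by rewrite (@dag_inv0 R q E dag Lk k suppk) ?mulr0 //; apply: dag.
have Bkk : forall i, Bk i k = B0 i k.
  move=> i; rewrite HB (bigD1 k) //= ckk mulr1 big1 ?addr0 // => l lk.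
  by rewrite HQ // (negbTE lk) mulr0.
have Bkj : forall i, Bk i j1 = B0 i k * (A0 *m Bk) k j1 + B0 i j1.
  move=> i; rewrite HB (bigD1 k) //=; congr (_ + _).
  rewrite (bigD1 j1) //= big1 ?addr0; first by rewrite HQ // eqxx mulr1.
  move=> l /andP[lk lj]; by rewrite HQ // (negbTE lj) mulr0.
have nz : 1 - D k k != 0 by rewrite subr_eq0 eq_sym.
exists (- (A0 *m Bk) k j1 / (1 - D k k)) => i.
rewrite !Dd' Dj mulr1 Bkk Bkj.
rewrite -{2}[B0 i k]mulr1 -mulrBr mulrCA -mulrA mulVf // mulr1.
ring.
Qed.
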